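(* Let $k$ be a positive integer. The clique number of $\mathcal F_k$ is $2$ if $k$ is even and $3$ if $k$ is odd.
   Context: The vertex set $V$ consists of all reduced fractions $p/q$ with $p,q\in\mathbb Z$, $\gcd(p,q)=1$, together with $1/0$; here $p/q$ and $(-p)/(-q)$ denote the same vertex. For vertices define $d(p/q,a/b)=|pb-qa|$. The graph $\mathcal F_k$ has vertex set $V$, with an edge between $p/q$ and $a/b$ exactly when $d(p/q,a/b)=k$. *)

(* Defs.v *)
From Stdlib Require Import ZArith List.
Open Scope Z_scope.

(* A vertex p/q is represented by a pair (p,q) of integers with gcd(p,q)=1;
   this includes 1/0 (and its representative (-1,0)). *)
Definition vertex (v : Z * Z) : Prop := Z.gcd (fst v) (snd v) = 1.

Definition same_vertex (v w : Z * Z) : Prop :=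
  v = w \/ (fst v = - fst w /\ snd v = - snd w).

Definition dist (v w : Z * Z) : Z :=
  Z.abs (fst v * snd w - snd v * fst w).

Definition adjF (k : Z) (v w : Z * Z) : Prop :=
  vertex v /\ vertex w /\ ~ same_vertex v w /\ dist v w = k.

Definition is_clique (k : Z) (l : list (Z * Z)) : Prop :=
  Forall vertex l /\ ForallOrdPairs (adjF k) l.

Definition clique_number (k : Z) (w : nat) : Prop :=
  (exists l, is_clique k l /\ length l = w) /\
  (forall l, is_clique k l -> (length l <= w)%nat).

(* Main.v *)
Require Import Defs.
From Stdlib Require Import ZArith List Lia Bool.
Open Scope Z_scope.

Lemma abs_sign (x k : Z) : 0 < k -> Z.abs x = k -> exists e, (e = 1 \/ e = -1) /\ x = e * k.
Proof. intros Hk H. destruct (Z.abs_spec x) as [[_ E]|[_ E]].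
- exists 1; split; [left; reflexivity| lia].
- exists (-1); split; [right; reflexivity| lia].
Qed.

Lemma tri (k u1 u2 v1 v2 w1 w2 : Z) : 0 < k ->
  Z.abs (u1*v2 - u2*v1) = k -> Z.abs (u1*w2 - u2*w1) = k -> Z.abs (v1*w2 - v2*w1) = k ->
  exists a b, (a = 1 \/ a = -1) /\ (b = 1 \/ b = -1) /\
     w1 = a*u1 + b*v1 /\ w2 = a*u2 + b*v2.
Proof.
  intros Hk H1 H2 H3.
  destruct (abs_sign _ _ Hk H1) as [e1 [He1 E1]].
  destruct (abs_sign _ _ Hk H2) as [e2 [He2 E2]].
  destruct (abs_sign _ _ Hk H3) as [e3 [He3 E3]].
  assert (F1 : (u1*v2 - u2*v1)*w1 - (u1*w2 - u2*w1)*v1 + (v1*w2 - v2*w1)*u1 = 0) by ring.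
  assert (F2 : (u1*v2 - u2*v1)*w2 - (u1*w2 - u2*w1)*v2 + (v1*w2 - v2*w1)*u2 = 0) by ring.
  rewrite E1, E2, E3 in F1, F2.
  assert (G1 : k * (e1*w1 - e2*v1 + e3*u1) = 0) by (rewrite <- F1; ring).
  assert (G2 : k * (e1*w2 - e2*v2 + e3*u2) = 0) by (rewrite <- F2; ring).
  apply Z.mul_eq_0 in G1; apply Z.mul_eq_0 in G2.
  destruct G1 as [G1|G1]; [lia|]. destruct G2 as [G2|G2]; [lia|].
  exists (- e1 * e3), (e1 * e2).
  destruct He1, He2, He3; subst e1 e2 e3; repeat split; try (left; reflexivity); try (right; reflexivity); lia.
Qed.

Lemma prim_par x y : Z.gcd x y = 1 -> Z.even x = false \/ Z.even y = false.
Proof.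
  intros H. destruct (Z.even x) eqn:Ex, (Z.even y) eqn:Ey; auto. exfalso.
  apply Z.even_spec in Ex; apply Z.even_spec in Ey.
  destruct Ex as [m Hm], Ey as [n Hn].
  assert (D : (2 | Z.gcd x y)).
  { apply Z.gcd_greatest; [exists m | exists n]; lia. }
  rewrite H in D. apply Z.divide_pos_le in D; lia.
Qed.

Lemma fop_inv {A} (R : A -> A -> Prop) x l : ForallOrdPairs R (x::l) -> Forall (R x) l /\ ForallOrdPairs R l.
Proof. intros H; inversion H; auto. Qed.

Lemma fa_inv {A} (P : A -> Prop) x l : Forall P (x::l) -> P x /\ Forall P l.
Proof. intros H; inversion H; auto. Qed.

Lemma get3 k (u v w : Z*Z) r : is_clique k (u::v::w::r) ->
  adjF k u v /\ adjF k u w /\ adjF k v w.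
Proof.
  intros [_ H]. apply fop_inv in H as [Fu H]. apply fop_inv in H as [Fv _].
  apply fa_inv in Fu as [A1 Fu]. apply fa_inv in Fu as [A2 _].
  apply fa_inv in Fv as [A3 _]. auto.
Qed.

Lemma get4 k (u v w x : Z*Z) r : is_clique k (u::v::w::x::r) ->
  adjF k u v /\ adjF k u w /\ adjF k u x /\ adjF k w x /\ adjF k v x.
Proof.
  intros [_ H]. apply fop_inv in H as [Fu H]. apply fop_inv in H as [Fv H].
  apply fop_inv in H as [Fw _].
  apply fa_inv in Fu as [A1 Fu]. apply fa_inv in Fu as [A2 Fu]. apply fa_inv in Fu as [A3 _].
  apply fa_inv in Fv as [_ Fv]. apply fa_inv in Fv as [A5 _].
  apply fa_inv in Fw as [A4 _]. auto.
Qed.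

Theorem lemma2p3 (k : Z) (hk : 0 < k) :
  clique_number k (if Z.even k then 2%nat else 3%nat).
Proof.
  destruct (Z.even k) eqn:Ek; split.
  - exists ((1,0)::(1,k)::nil). split; [|reflexivity].
    assert (V1 : vertex (1,0)) by reflexivity.
    assert (V2 : vertex (1,k)) by (unfold vertex; simpl; apply Z.gcd_1_l).
    split.
    + repeat constructor; auto.
    + constructor.
      * constructor; [|constructor]. unfold adjF, same_vertex, dist; cbn [fst snd].
        repeat split; auto; [intros [E|[E1 E2]]; [inversion E; lia| lia] | ].
        lia.
      * constructor; [constructor|constructor].
  - intros l Hl.
    destruct l as [|u [|v [|w r]]]; simpl; try lia. exfalso.
    destruct (get3 _ _ _ _ _ Hl) as [[Vu [Vv [_ D1]]] [[_ [Vw [_ D2]]] [_ [_ [_ D3]]]]].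
    destruct u as [u1 u2], v as [v1 v2], w as [w1 w2].
    unfold vertex, dist in *; simpl in *.
    destruct (tri _ _ _ _ _ _ _ hk D1 D2 D3) as [a [b [Ha [Hb [W1 W2]]]]].
    destruct (abs_sign _ _ hk D1) as [e [He E]].
    assert (Pe : Z.even (u1*v2 - u2*v1) = true).
    { rewrite E, Z.even_mul, Ek. apply orb_true_r. }
    assert (Pa : Z.even a = false) by (destruct Ha; subst; reflexivity).
    assert (Pb : Z.even b = false) by (destruct Hb; subst; reflexivity).
    apply prim_par in Vu; apply prim_par in Vv; apply prim_par in Vw.
    rewrite W1, W2 in Vw.
    rewrite Z.even_sub, !Z.even_mul in Pe.
    rewrite !Z.even_add, !Z.even_mul, Pa, Pb in Vw. simpl in Vw.
    destruct (Z.even u1), (Z.even u2), (Z.even v1), (Z.even v2); simpl in *;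
      intuition discriminate.
  - assert (Ok : Z.odd k = true) by (rewrite <- Z.negb_even, Ek; reflexivity).
    apply Z.odd_spec in Ok. destruct Ok as [m Hm].
    exists ((1,0)::(1,k)::(2,k)::nil). split; [|reflexivity].
    assert (V1 : vertex (1,0)) by reflexivity.
    assert (V2 : vertex (1,k)) by (unfold vertex; simpl; apply Z.gcd_1_l).
    assert (V3 : vertex (2,k)).
    { unfold vertex; cbn [fst snd]. replace k with (1 + m*2) by lia.
      rewrite Z.gcd_add_mult_diag_r. reflexivity. }
    split.
    + repeat constructor; auto.
    + assert (N : forall a b c d : Z, a <> c \/ b <> d -> a <> - c \/ b <> - d -> ~ same_vertex (a,b) (c,d)).
      { intros a b c d H1 H2 [E|[E1 E2]]; [inversion E; lia | simpl in *; lia]. }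
      repeat constructor; unfold adjF, dist; cbn [fst snd]; repeat split; auto;
        try (apply N; lia); lia.
  - intros l Hl.
    destruct l as [|u [|v [|w [|x r]]]]; simpl; try lia. exfalso.
    destruct (get4 _ _ _ _ _ _ Hl) as [[_ [_ [_ D1]]] [[_ [_ [_ D2]]] [[_ [_ [_ D3]]] [[_ [_ [_ D4]]] [_ [_ [_ D6]]]]]]].
    destruct (get3 _ _ _ _ _ Hl) as [_ [_ [_ [_ [_ D5]]]]].
    destruct u as [u1 u2], v as [v1 v2], w as [w1 w2], x as [x1 x2].
    unfold dist in *; simpl in *.
    destruct (tri _ _ _ _ _ _ _ hk D1 D2 D5) as [a [b [Ha [Hb [W1 W2]]]]].
    destruct (tri _ _ _ _ _ _ _ hk D1 D3 D6) as [c [d [Hc [Hd [X1 X2]]]]].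
    assert (Id : w1*x2 - w2*x1 = (a*d - b*c) * (u1*v2 - u2*v1)) by (subst; ring).
    assert (D7 : Z.abs ((a*d - b*c) * (u1*v2 - u2*v1)) = k) by (rewrite <- Id; exact D4).
    rewrite Z.abs_mul, D1 in D7. clear D4. rename D7 into D4.
    destruct Ha, Hb, Hc, Hd; subst a b c d; lia.
Qed.
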